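(* Let $k\ge1$ be an integer. If $\mathcal S=\{a_1<\cdots<a_m\}\subset\mathbb N$ is a $\mathcal D_k$ set, then, as $m\to\infty$, $$a_m\ \ge\ (1+o(1))\,\frac{(k+1)^m}{2}\sqrt{\frac{6}{m\pi k(k+2)}}.$$ Consequently, for an infinite $\mathcal D_k$ set $\mathcal S\subseteq\mathbb N$, as $n\to\infty$, $$|\mathcal S(n)|\ \le\ \log_{k+1}n+\frac12\log_{k+1}\log_2 n+\frac12\log_{k+1}\left(\frac{2\pi}{3}k(k+2)\right)+o(1),$$ where $\mathcal S(n):=\mathcal S\cap[1,n]$.
   Context: For a positive integer $k$, a set $\mathcal S\subseteq\mathbb N$ is a $\mathcal D_k$ set if any equality $\sum_{s\in\mathcal S}\varepsilon_s s=0$ with $\varepsilon_s\in\{-k,\dots,-1,0,1,\dots,k\}$ (only finitely many nonzero) implies that all $\varepsilon_s$ are $0$. *)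

(* Defs.v *)
From Stdlib Require Import Reals ZArith List.
Open Scope R_scope.

Definition zsum (eps : nat -> Z) (l : list nat) : Z :=
  fold_right (fun s acc => (eps s * Z.of_nat s + acc)%Z) 0%Z l.

(* Finitely supported coefficient families are represented by a
   duplicate-free finite list l of elements of S carrying the (possibly)
   nonzero coefficients. *)
Definition Dk (k : nat) (S : nat -> Prop) : Prop :=
  forall (l : list nat) (eps : nat -> Z),
    NoDup l ->
    (forall s, In s l -> S s) ->
    (forall s, In s l -> (Z.abs (eps s) <= Z.of_nat k)%Z) ->
    zsum eps l = 0%Z ->
    forall s, In s l -> eps s = 0%Z.

Definition logb (b x : R) : R := ln x / ln b.

Definition lower_bound (k m : nat) : R :=
  (INR (k + 1)) ^ m / 2 * sqrt (6 / (INR m * PI * INR k * INR (k + 2))).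

Definition count_bound (k n : nat) : R :=
  logb (INR (k + 1)) (INR n)
  + / 2 * logb (INR (k + 1)) (logb 2 (INR n))
  + / 2 * logb (INR (k + 1)) (2 * PI / 3 * (INR k * INR (k + 2))).

(* Main.v *)
Require Import Defs.
From Stdlib Require Import Reals ZArith List Lia Lra Psatz.
Open Scope R_scope.
Open Scope Z_scope.

Definition s1 (L : list Z) : Z := fold_right Z.add 0 L.
Definition s2 (L : list Z) : Z := fold_right (fun x acc => x*x + acc) 0 L.

Lemma s1_app l1 l2 : s1 (l1 ++ l2) = s1 l1 + s1 l2.
Proof. induction l1; simpl; [lia|]. unfold s1 in *; simpl; lia. Qed.
Lemma s2_app l1 l2 : s2 (l1 ++ l2) = s2 l1 + s2 l2.
Proof. induction l1; simpl; [lia|]. unfold s2 in *; simpl; lia. Qed.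
Lemma s1_map d L : s1 (map (fun s => d + s) L) = d * Z.of_nat (length L) + s1 L.
Proof. induction L; simpl; [lia|]. unfold s1 in *; simpl. lia. Qed.
Lemma s2_map d L : s2 (map (fun s => d + s) L) = d*d * Z.of_nat (length L) + 2*d*s1 L + s2 L.
Proof. induction L; [simpl; lia|]. unfold s2, s1 in *. cbn [map fold_right length]. rewrite IHL, Nat2Z.inj_succ. ring. Qed.
Lemma s2_mapm d L : s2 (map (fun s => d - s) L) = d*d * Z.of_nat (length L) - 2*d*s1 L + s2 L.
Proof. induction L; [simpl; lia|]. unfold s2, s1 in *. cbn [map fold_right length]. rewrite IHL, Nat2Z.inj_succ. ring. Qed.

Lemma max_exists (L : list Z) : L <> nil -> exists y, In y L /\ forall x, In x L -> x <= y.
Proof.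
  induction L as [|a L IH]; intros H; [congruence|].
  destruct L as [|b L].
  - exists a; split; [left; auto|]. intros x [->|[]]; lia.
  - destruct IH as [y [Hy Hm]]; [discriminate|].
    destruct (Z_le_gt_dec a y).
    + exists y; split; [right; auto|]. intros x [->|Hx]; [lia|auto].
    + exists a; split; [left; auto|]. intros x [->|Hx]; [lia|]. specialize (Hm x Hx); lia.
Qed.

Lemma pigeon (L : list Z) (N : nat) : NoDup L -> (forall x, In x L -> 0 < x <= Z.of_nat N) ->
  (length L <= N)%nat.
Proof.
  intros HL Hb.
  assert (E : length (map Z.of_nat (seq 1 N)) = N) by (rewrite length_map, length_seq; auto).
  rewrite <- E at 1. apply NoDup_incl_length; auto.
  intros x Hx. apply Hb in Hx. apply in_map_iff. exists (Z.to_nat x). split; [lia|].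
  apply in_seq. lia.
Qed.

Lemma lemD (N : nat) : forall L, NoDup L -> length L = N -> (forall x, In x L -> 0 < x) ->
  6 * s2 L >= Z.of_nat N * (Z.of_nat N + 1) * (2 * Z.of_nat N + 1).
Proof.
  induction N as [|N IH]; intros L HL Hlen Hpos.
  - simpl. destruct L; [|discriminate]. simpl. lia.
  - destruct (max_exists L) as [y [Hy Hm]]. { intros ->; discriminate. }
    destruct (Z_le_gt_dec y (Z.of_nat N)) as [Hle|Hgt].
    + exfalso. assert (length L <= N)%nat; [|lia].
      apply pigeon; auto. intros x Hx; split; auto. specialize (Hm x Hx); lia.
    + destruct (in_split _ _ Hy) as [L1 [L2 ->]].
      assert (H1 := NoDup_remove_1 _ _ _ HL).
      assert (6 * s2 (L1 ++ L2) >= Z.of_nat N * (Z.of_nat N + 1) * (2 * Z.of_nat N + 1)).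
      { apply IH; auto. rewrite length_app in *; simpl in *; lia.
        intros x Hx; apply Hpos; apply in_app_or in Hx; apply in_or_app; simpl; tauto. }
      rewrite !s2_app in *. unfold s2 in *. cbn [fold_right]. rewrite Nat2Z.inj_succ. nia.
Qed.

Lemma lemV (N : nat) : forall L, NoDup L -> length L = N ->
  12 * (Z.of_nat N * s2 L - s1 L * s1 L) >= Z.of_nat N * Z.of_nat N * (Z.of_nat N * Z.of_nat N - 1).
Proof.
  induction N as [|N IH]; intros L HL Hlen.
  - destruct L; [|discriminate]. simpl. lia.
  - destruct (max_exists L) as [y [Hy Hm]]. { intros ->; discriminate. }
    destruct (in_split _ _ Hy) as [L1 [L2 ->]].
    destruct (NoDup_remove _ _ _ HL) as [H1 H2].
    set (L' := L1 ++ L2) in *.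
    assert (Hl' : length L' = N). { unfold L'; rewrite length_app in *; simpl in *; lia. }
    assert (HI := IH L' H1 Hl').
    assert (HD := lemD N (map (fun x => y - x) L')).
    rewrite s2_mapm, length_map, Hl' in HD.
    assert (Hs1 : s1 (L1 ++ y :: L2) = y + s1 L').
    { unfold L'; rewrite !s1_app; simpl; lia. }
    assert (Hs2 : s2 (L1 ++ y :: L2) = y*y + s2 L').
    { unfold L'; rewrite !s2_app; simpl; lia. }
    rewrite Hs1, Hs2, Nat2Z.inj_succ.
    assert (6 * (y * y * Z.of_nat N - 2 * y * s1 L' + s2 L') >=
         Z.of_nat N * (Z.of_nat N + 1) * (2 * Z.of_nat N + 1)).
    { apply HD.
      - apply NoDup_map_NoDup_ForallPairs; auto. intros a b _ _; lia.
      - reflexivity.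
      - intros x Hx. apply in_map_iff in Hx. destruct Hx as [z [<- Hz]].
        assert (z <> y) by (intros ->; tauto).
        assert (z <= y). { apply Hm. unfold L' in Hz. apply in_app_or in Hz; apply in_or_app; simpl; tauto. }
        lia. }
    nia.
Qed.

Fixpoint layer (j : nat) (c : Z) (L : list Z) : list Z :=
  match j with
  | O => L
  | S j' => map (fun s => Z.of_nat (S j') * c + s) L ++ layer j' c L
  end.

Fixpoint sums (k : nat) (a : list nat) : list Z :=
  match a with
  | nil => 0 :: nil
  | x :: r => layer k (Z.of_nat x) (sums k r)
  end.

Definition sqa (a : list nat) : Z := fold_right (fun x acc => Z.of_nat x * Z.of_nat x + acc) 0 a.

Lemma len_layer j c L : length (layer j c L) = (S j * length L)%nat.
Proof. induction j; simpl; [lia|]. rewrite length_app, length_map, IHj. lia. Qed.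

Lemma s1_layer j c L : 2 * s1 (layer j c L) =
  2 * (Z.of_nat j + 1) * s1 L + c * Z.of_nat (length L) * Z.of_nat j * (Z.of_nat j + 1).
Proof.
  induction j; [simpl; lia|].
  cbn [layer]. rewrite s1_app, s1_map. rewrite Nat2Z.inj_succ. nia.
Qed.

Lemma s2_layer j c L : 6 * s2 (layer j c L) =
  6 * (Z.of_nat j + 1) * s2 L + 6 * c * Z.of_nat j * (Z.of_nat j + 1) * s1 L
  + c * c * Z.of_nat (length L) * Z.of_nat j * (Z.of_nat j + 1) * (2 * Z.of_nat j + 1).
Proof.
  induction j; [simpl; lia|].
  cbn [layer]. rewrite s2_app, s2_map. rewrite Nat2Z.inj_succ. nia.
Qed.

Lemma In_layer j c L s : In s (layer j c L) ->
  exists e, (e <= j)%nat /\ exists s', In s' L /\ s = Z.of_nat e * c + s'.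
Proof.
  induction j; simpl; intros H.
  - exists 0%nat; split; [lia|]. exists s; split; auto.
  - apply in_app_or in H. destruct H as [H|H].
    + apply in_map_iff in H. destruct H as [s' [<- Hs']].
      exists (S j); split; [lia|]. exists s'; split; auto.
    + destruct (IHj H) as [e [He Hs]]. exists e; split; [lia|auto].
Qed.

Lemma NoDup_layer j c L : NoDup L ->
  (forall e e' s s', (e <= j)%nat -> (e' <= j)%nat -> In s L -> In s' L ->
     Z.of_nat e * c + s = Z.of_nat e' * c + s' -> e = e') ->
  NoDup (layer j c L).
Proof.
  induction j; intros HL Hc; simpl; auto.
  apply NoDup_app.
  - apply NoDup_map_NoDup_ForallPairs; auto. intros a b _ _; lia.
  - apply IHj; auto. intros e e0 s s0 ? ? ? ? ?; apply (Hc e e0 s s0); auto; lia.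
  - intros x Hx Hx'. apply in_map_iff in Hx. destruct Hx as [s [<- Hs]].
    destruct (In_layer _ _ _ _ Hx') as [e [He [s' [Hs' Heq]]]].
    assert (S j = e) by (apply (Hc (S j) e s s'); auto; lia). lia.
Qed.

Lemma zsum_ext f g l : (forall s, In s l -> f s = g s) -> zsum f l = zsum g l.
Proof. induction l; simpl; intros H; auto. rewrite H, IHl; auto. Qed.

Lemma zsum_sub f g l : zsum (fun x => f x - g x) l = zsum f l - zsum g l.
Proof. induction l; simpl; auto. rewrite IHl. ring. Qed.

Lemma repr k a s : NoDup a -> In s (sums k a) ->
  exists eps : nat -> Z, (forall x, 0 <= eps x <= Z.of_nat k) /\ s = zsum eps a.
Proof.
  revert s; induction a as [|x r IH]; intros s Ha Hs; simpl in Hs.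
  - destruct Hs as [<-|[]]. exists (fun _ => 0). split; [lia|reflexivity].
  - inversion Ha; subst.
    destruct (In_layer _ _ _ _ Hs) as [e [He [s' [Hs' ->]]]].
    destruct (IH s' H2 Hs') as [eps [Hb ->]].
    exists (fun y => if Nat.eq_dec y x then Z.of_nat e else eps y). split.
    + intros y; destruct (Nat.eq_dec y x); [lia|auto].
    + simpl. destruct (Nat.eq_dec x x); [|congruence].
      rewrite (zsum_ext (fun y => if Nat.eq_dec y x then Z.of_nat e else eps y) eps r). ring.
      intros y Hy. destruct (Nat.eq_dec y x); auto. subst; tauto.
Qed.

Lemma Dk_mono k (S T : nat -> Prop) : (forall x, S x -> T x) -> Dk k T -> Dk k S.
Proof. unfold Dk; intros HST HT l eps H1 H2 H3 H4. apply HT; auto. Qed.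

Lemma NoDup_sums k a : NoDup a -> Dk k (fun x => In x a) -> NoDup (sums k a).
Proof.
  induction a as [|x r IH]; intros Ha HD; simpl.
  - constructor; [auto|constructor].
  - inversion Ha; subst.
    apply NoDup_layer.
    + apply IH; auto. eapply Dk_mono; [|exact HD]. simpl; auto.
    + intros e e' s s' He He' Hs Hs' Heq.
      destruct (repr k r s H2 Hs) as [eps [Hb Heps]].
      destruct (repr k r s' H2 Hs') as [eps' [Hb' Heps']].
      set (f := fun y => if Nat.eq_dec y x then Z.of_nat e - Z.of_nat e' else eps y - eps' y).
      assert (f x = 0).
      { apply (HD (x :: r) f Ha).
        - auto.
        - intros y _; unfold f. destruct (Nat.eq_dec y x).
          + lia.
          + specialize (Hb y); specialize (Hb' y); lia.
        - simpl. unfold f at 1. destruct (Nat.eq_dec x x); [|congruence].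
          rewrite (zsum_ext f (fun y => eps y - eps' y)).
          + rewrite zsum_sub, <- Heps, <- Heps'. lia.
          + intros y Hy. unfold f. destruct (Nat.eq_dec y x); auto. subst; tauto.
        - left; auto. }
      unfold f in H. destruct (Nat.eq_dec x x); [|congruence]. lia.
Qed.

Lemma len_sums k a : length (sums k a) = Nat.pow (S k) (length a).
Proof. induction a; simpl; auto. rewrite len_layer, IHa. reflexivity. Qed.

Lemma Q_sums k a :
  12 * (Z.of_nat (length (sums k a)) * s2 (sums k a) - s1 (sums k a) * s1 (sums k a)) =
  Z.of_nat (length (sums k a)) * Z.of_nat (length (sums k a)) * (Z.of_nat k * (Z.of_nat k + 2)) * sqa a.
Proof.
  induction a as [|x r IH].
  - simpl. ring.
  - cbn [sums]. set (L := sums k r) in *. set (c := Z.of_nat x).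
    assert (H1 := s1_layer k c L). assert (H2 := s2_layer k c L).
    rewrite len_layer. 
    set (A := s1 (layer k c L)) in *. set (B := s2 (layer k c L)) in *.
    set (N := Z.of_nat (length L)) in *.
    rewrite Nat2Z.inj_mul, Nat2Z.inj_succ. fold N.
    rewrite <- Z.add_1_r.
    replace (12 * ((Z.of_nat k + 1) * N * B - A * A))
      with (2 * (Z.of_nat k + 1) * N * (6 * B) - 3 * (2 * A) * (2 * A)) by ring.
    rewrite H1, H2. unfold sqa; cbn [fold_right]; fold (sqa r).
    unfold c.
    transitivity ((Z.of_nat k + 1) * (Z.of_nat k + 1) * (12 * (N * s2 L - s1 L * s1 L))
       + Z.of_nat x * Z.of_nat x * N * N * (Z.of_nat k + 1) * (Z.of_nat k + 1) * Z.of_nat k * (Z.of_nat k + 2)).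
    { ring. }
    rewrite IH. ring.
Qed.

Lemma sqa_le a M : (forall x, In x a -> (x <= M)%nat) ->
  sqa a <= Z.of_nat (length a) * (Z.of_nat M * Z.of_nat M).
Proof.
  induction a as [|x r IH]; intros H; [simpl; lia|].
  unfold sqa; cbn [fold_right length]; fold (sqa r).
  assert (x <= M)%nat by (apply H; left; auto).
  assert (sqa r <= Z.of_nat (length r) * (Z.of_nat M * Z.of_nat M)) by (apply IH; intros; apply H; right; auto).
  rewrite Nat2Z.inj_succ. nia.
Qed.

Lemma key_nat k a : NoDup a -> Dk k (fun x => In x a) ->
  (S k ^ length a * S k ^ length a <= length a * (k * (k + 2)) * (list_max a * list_max a) + 1)%nat.
Proof.
  intros Ha HD.
  assert (HN := NoDup_sums k a Ha HD).
  assert (HV := lemV _ _ HN eq_refl).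
  rewrite Q_sums, len_sums in HV.
  assert (Hs := sqa_le a (list_max a)).
  assert (Hm : forall x, In x a -> (x <= list_max a)%nat).
  { intros x Hx. assert (H := proj1 (list_max_le a (list_max a)) (le_n _)).
    rewrite Forall_forall in H. auto. }
  specialize (Hs Hm).
  set (N := Z.of_nat (S k ^ length a)) in *.
  assert (0 < N). { unfold N. assert (0 < S k ^ length a)%nat by (apply Nat.neq_0_lt_0, Nat.pow_nonzero; lia). lia. }
  assert (Z.of_nat k * (Z.of_nat k + 2) * sqa a >= N * N - 1).
  { assert (N * N * (Z.of_nat k * (Z.of_nat k + 2) * sqa a) >= N * N * (N * N - 1)) by nia.
    assert (0 < N * N) by nia. nia. }
  assert (Z.of_nat k * (Z.of_nat k + 2) * sqa a <=
          Z.of_nat k * (Z.of_nat k + 2) * (Z.of_nat (length a) * (Z.of_nat (list_max a) * Z.of_nat (list_max a)))).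
  { apply Z.mul_le_mono_nonneg_l; lia. }
  unfold N in *. lia.
Qed.

Close Scope Z_scope.
Open Scope R_scope.

Lemma key_R k a : NoDup a -> Dk k (fun x => In x a) ->
  INR (k + 1) ^ (2 * length a) <= INR (length a) * INR k * INR (k + 2) * INR (list_max a) ^ 2 + 1.
Proof.
  intros Ha HD. assert (H := key_nat k a Ha HD).
  apply le_INR in H.
  replace (k + 1)%nat with (S k) by lia.
  replace (2 * length a)%nat with (length a + length a)%nat by lia.
  rewrite pow_add. rewrite !plus_INR, !mult_INR, pow_INR in H.
  eapply Rle_trans; [apply H|]. right. rewrite !plus_INR. change (INR 1) with 1. ring.
Qed.

Lemma pi_lb : 3.135 <= PI.
Proof. assert (H := proj1 (PI_2_3_7_ineq 0)). unfold sum_f_R0, tg_alt, PI_2_3_7_tg, Ratan_seq in H. simpl in H. lra. Qed.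

Lemma ln_le' x y : 0 < x -> x <= y -> ln x <= ln y.
Proof. intros Hx [H|H]; [left; apply ln_increasing; auto|subst; right; auto]. Qed.

Lemma ln_le_sub1 u : 0 < u -> ln u <= u - 1.
Proof. intros Hu. assert (H := exp_ineq1_le (ln u)). rewrite exp_ln in H; auto. lra. Qed.

Lemma ln2_lt1 : ln 2 < 1.
Proof.
  assert (H := exp_ineq1 1 ltac:(lra)).
  rewrite <- (ln_exp 1). apply ln_increasing; lra.
Qed.

Lemma part1_real (k m : nat) (M : R) : (1 <= k)%nat -> (1 <= m)%nat -> 0 <= M ->
  INR (k + 1) ^ m * INR (k + 1) ^ m <= INR m * INR k * INR (k + 2) * M ^ 2 + 1 ->
  forall eps, 0 < eps -> (1 - eps) * lower_bound k m <= M.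
Proof.
  intros hk hm hM H eps heps.
  unfold lower_bound.
  set (X := INR (k + 1) ^ m) in *.
  assert (HK : 2 <= INR (k + 1)). { replace 2 with (INR 2) by (simpl; ring). apply le_INR; lia. }
  assert (HX : 2 <= X). { unfold X. apply Rle_trans with (INR (k+1) ^ 1). simpl; lra. apply Rle_pow; [lra|lia]. }
  assert (Hk : 1 <= INR k). { replace 1 with (INR 1) by reflexivity. apply le_INR; lia. }
  assert (Hm : 1 <= INR m). { replace 1 with (INR 1) by reflexivity. apply le_INR; lia. }
  assert (Hk2 : INR (k + 2) = INR k + 2). { rewrite plus_INR; simpl; ring. }
  rewrite Hk2 in *.
  assert (Hpi := pi_lb).
  set (D := INR m * PI * INR k * (INR k + 2)).
  assert (HD : 0 < D). { unfold D. apply Rmult_lt_0_compat; [|lra]. apply Rmult_lt_0_compat; [|lra]. apply Rmult_lt_0_compat; lra. }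
  assert (Hq : 0 < 6 / D). { apply Rdiv_lt_0_compat; lra. }
  set (T := X / 2 * sqrt (6 / D)).
  assert (HT0 : 0 <= T). { unfold T. apply Rmult_le_pos; [lra|apply sqrt_pos]. }
  assert (HT : T <= M).
  { apply Rsqr_incr_0_var; auto. unfold T, Rsqr.
    replace (X / 2 * sqrt (6 / D) * (X / 2 * sqrt (6 / D))) with (X * X / 4 * (sqrt (6 / D) * sqrt (6 / D))) by field.
    rewrite sqrt_sqrt by lra.
    apply Rmult_le_reg_r with D; auto.
    replace (X * X / 4 * (6 / D) * D) with (3 / 2 * (X * X)) by (field; lra).
    unfold D.
    assert (INR m * INR k * (INR k + 2) * M ^ 2 >= X * X - 1) by lra.
    assert (X * X >= 4) by nra.
    assert (0 <= INR m * INR k * (INR k + 2) * M ^ 2) by (apply Rmult_le_pos; [apply Rmult_le_pos; [nra|lra]|nra]).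
    nra. }
  fold D. fold T. nra.
Qed.

Lemma part2_real (k m n : nat) : (1 <= k)%nat -> (1 <= m)%nat -> (1 <= n)%nat ->
  10000 <= ln (INR n) ->
  INR (k + 1) ^ m * INR (k + 1) ^ m <= INR m * INR k * INR (k + 2) * INR n ^ 2 + 1 ->
  INR m <= count_bound k n.
Proof.
  intros hk hm hn HL H.
  unfold count_bound, logb.
  set (K := INR (k + 1)) in *. set (x := INR m) in *. set (L := ln (INR n)) in *.
  assert (HK : 2 <= K). { unfold K. replace 2 with (INR 2) by (simpl; ring). apply le_INR; lia. }
  assert (Hk : 1 <= INR k). { replace 1 with (INR 1) by reflexivity. apply le_INR; lia. }
  assert (Hx : 1 <= x). { unfold x. replace 1 with (INR 1) by reflexivity. apply le_INR; lia. }
  assert (Hn : 1 <= INR n). { replace 1 with (INR 1) by reflexivity. apply le_INR; lia. }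
  assert (Hk2 : INR (k + 2) = INR k + 2). { rewrite plus_INR; simpl; ring. }
  assert (HKk : K = INR k + 1). { unfold K; rewrite plus_INR; simpl; ring. }
  rewrite Hk2 in *.
  assert (Hpi := pi_lb). assert (Hl2 := ln_lt_2). assert (Hl2' := ln2_lt1).
  assert (HlnK : ln 2 <= ln K) by (apply ln_le'; lra).
  set (C := INR k * (INR k + 2)).
  assert (HC : 0 < C) by (unfold C; nra).
  assert (HCK : C <= K * K) by (unfold C; rewrite HKk; nra).
  assert (Hb : INR (m + m) * ln K <= ln 2 + ln x + ln C + 2 * L).
  { rewrite <- ln_pow by lra. rewrite pow_add.
    assert (Hp : K ^ m * K ^ m <= 2 * x * C * (INR n * INR n)).
    { assert (1 <= x * C * (INR n * INR n)).
      { assert (1 <= x * C) by (unfold C; nra). nra. }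
      assert (E: x * INR k * (INR k + 2) * INR n ^ 2 = x * C * (INR n * INR n)) by (unfold C; ring). lra. }
    assert (0 < K ^ m) by (apply pow_lt; lra).
    eapply Rle_trans. { apply ln_le'. nra. exact Hp. }
    rewrite !ln_mult by (try apply Rmult_lt_0_compat; lra).
    unfold L; lra. }
  rewrite plus_INR in Hb. fold x in Hb.
  assert (HlnC : ln C <= 2 * ln K).
  { replace (2 * ln K) with (ln (K * K)) by (rewrite ln_mult; lra). apply ln_le'; lra. }
  set (u := sqrt x).
  assert (Hu : u * u = x) by (unfold u; apply sqrt_sqrt; lra).
  assert (Hu1 : 1 <= u). { unfold u. rewrite <- sqrt_1. apply sqrt_le_1_alt. lra. }
  assert (Hlnx : ln x <= 2 * u - 2).
  { rewrite <- Hu, ln_mult by lra. assert (H1 := ln_le_sub1 u ltac:(lra)). lra. }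
  assert (He : x * ln 2 <= PI / 3 * L).
  { destruct (Rle_dec u 100) as [Hs|Hs].
    - assert (x <= 10000) by nra. nra.
    - assert (H2 : 2 * (x - 1) * ln 2 <= ln 2 + ln x + 2 * L).
      { assert (2 * (x - 1) * ln 2 <= 2 * (x - 1) * ln K) by nra. nra. }
      rewrite <- Hu in H2 |- *.
      assert (Hbr : 0 <= (u * u - 1.5) * ln 2 - u + 1) by nra.
      assert (L >= (u * u - 1.5) * ln 2 - u + 1) by nra.
      assert (PI / 3 * L >= 1.045 * ((u * u - 1.5) * ln 2 - u + 1)) by nra.
      nra. }
  assert (HL0 : 0 < L) by lra.
  assert (Hlx : ln x <= ln (PI / 3 * (L / ln 2))).
  { apply ln_le'; [lra|]. apply Rmult_le_reg_r with (ln 2); [lra|].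
    replace (PI / 3 * (L / ln 2) * ln 2) with (PI / 3 * L) by (field; lra). lra. }
  assert (Hfin : 2 * x * ln K <= 2 * L + ln (L / ln 2) + ln (2 * PI / 3 * C)).
  { replace (ln (2 * PI / 3 * C)) with (ln 2 + ln (PI / 3) + ln C).
    2:{ replace (2 * PI / 3 * C) with (2 * (PI / 3) * C) by field.
        rewrite !ln_mult; try lra; try (apply Rmult_lt_0_compat; lra). }
    rewrite ln_mult in Hlx by (try apply Rdiv_lt_0_compat; lra).
    lra. }
  fold C.
  assert (0 < ln K) by lra.
  apply Rmult_le_reg_r with (2 * ln K); [lra|].
  replace ((L / ln K + / 2 * (ln (L / ln 2) / ln K) + / 2 * (ln (2 * PI / 3 * C) / ln K)) * (2 * ln K))
    with (2 * L + ln (L / ln 2) + ln (2 * PI / 3 * C)) by (field; lra).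
  lra.
Qed.

Theorem theorem6 (k : nat) (hk : (1 <= k)%nat) :
  (forall eps : R, 0 < eps ->
     exists M : nat, forall (m : nat) (a : list nat),
       (M <= m)%nat -> NoDup a -> length a = m -> Dk k (fun x => In x a) ->
       (1 - eps) * lower_bound k m <= INR (list_max a))
  /\
  (forall S : nat -> Prop, Dk k S -> (forall N : nat, exists x, (N <= x)%nat /\ S x) ->
     forall eps : R, 0 < eps ->
       exists N : nat, forall n : nat, (N <= n)%nat ->
         forall l : list nat, NoDup l ->
           (forall x, In x l -> S x /\ (1 <= x <= n)%nat) ->
           INR (length l) <= count_bound k n + eps).
Proof.
  split.
  - intros eps heps. exists 1%nat. intros m a hm ha hlen hD.
    apply part1_real; auto. apply pos_INR.
    subst m. rewrite <- pow_add. replace (length a + length a)%nat with (2 * length a)%nat by lia.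
    apply key_R; auto.
  - intros S hS _ eps heps.
    destruct (INR_unbounded (exp 10000)) as [N0 HN0].
    exists (max 1 N0). intros n hn l hl hin.
    assert (hn1 : (1 <= n)%nat) by lia.
    assert (HL : 10000 <= ln (INR n)).
    { rewrite <- (ln_exp 10000). apply ln_le'. apply exp_pos.
      apply Rle_trans with (INR N0); [lra|]. apply le_INR; lia. }
    assert (Hn1 : 1 <= INR n). { replace 1 with (INR 1) by reflexivity. apply le_INR; lia. }
    assert (H1 : 1 <= count_bound k n).
    { replace 1 with (INR 1) by reflexivity. apply part2_real; auto.
      replace (INR (k+1)) with (INR k + 1) by (rewrite plus_INR; simpl; ring).
      replace (INR (k+2)) with (INR k + 2) by (rewrite plus_INR; simpl; ring).
      simpl. assert (1 <= INR n * INR n) by nra. assert (0 <= INR k) by apply pos_INR. nra. }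
    destruct (length l) as [|m] eqn:Hm.
    + simpl. lra.
    + assert (INR (Datatypes.S m) <= count_bound k n); [|lra].
      rewrite <- Hm. apply part2_real; auto; try lia.
      assert (hD : Dk k (fun x => In x l)).
      { eapply Dk_mono; [|exact hS]. intros x hx; apply (hin x hx). }
      assert (HK := key_R k l hl hD).
      replace (2 * length l)%nat with (length l + length l)%nat in HK by lia.
      rewrite pow_add in HK.
      assert (HM : (list_max l <= n)%nat).
      { apply list_max_le. apply Forall_forall. intros x hx. apply hin; auto. }
      apply le_INR in HM.
      assert (0 <= INR (list_max l)) by apply pos_INR.
      assert (INR (list_max l) ^ 2 <= INR n ^ 2) by (simpl; nra).
      assert (0 <= INR (length l) * INR k * INR (k + 2)).
      { apply Rmult_le_pos; [apply Rmult_le_pos|]; apply pos_INR. }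
      eapply Rle_trans; [exact HK|]. apply Rplus_le_compat_r. apply Rmult_le_compat_l; auto.
Qed.
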